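(* Let $\Gamma$ be a discrete subgroup of $E(n)$, and let $A=\lambda A'$, where $A'\in O(n)$ and $\lambda>0$. Suppose that $A\Gamma A^{-1}\subset\Gamma$. Then $A\Gamma A^{-1}$ is a subgroup of finite index in $\Gamma$.
   Context: $E(n)$ denotes the group of isometries of $\mathbb{R}^n$ (maps $x\mapsto Bx+b$, $B\in O(n)$, $b\in\mathbb{R}^n$) with the topology of $O(n)\times\mathbb{R}^n$; discreteness refers to this topology. $A\Gamma A^{-1}=\{A\circ\gamma\circ A^{-1}:\gamma\in\Gamma\}$. *)

(* Defs.v *)
From Stdlib Require Import Reals Lra Lia List Arith.
Open Scope R_scope.

Definition Ix (n : nat) := {i : nat | (i < n)%nat}.
Definition vec (n : nat) := Ix n -> R.
Definition mat (n : nat) := Ix n -> Ix n -> R.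

Fixpoint sum_upto (g : nat -> R) (m : nat) : R :=
  match m with
  | O => 0
  | S m' => sum_upto g m' + g m'
  end.

Definition sumI (n : nat) (f : Ix n -> R) : R :=
  sum_upto (fun k => match lt_dec k n with
                     | left H => f (exist _ k H)
                     | right _ => 0
                     end) n.

Definition kron (n : nat) (i j : Ix n) : R :=
  if Nat.eq_dec (proj1_sig i) (proj1_sig j) then 1 else 0.

Definition mv (n : nat) (M : mat n) (x : vec n) : vec n :=
  fun i => sumI n (fun k => M i k * x k).

Definition transpose (n : nat) (M : mat n) : mat n := fun i j => M j i.

Definition orthogonal (n : nat) (M : mat n) : Prop :=
  forall i j, sumI n (fun k => M k i * M k j) = kron n i j.

Definition is_isometry (n : nat) (f : vec n -> vec n) : Prop :=
  exists (B : mat n) (b : vec n),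
    orthogonal n B /\ f = (fun x => fun i => mv n B x i + b i).

Definition subgroup_E (n : nat) (G : (vec n -> vec n) -> Prop) : Prop :=
  (forall f, G f -> is_isometry n f) /\
  G (fun x => x) /\
  (forall f g, G f -> G g -> G (fun x => f (g x))) /\
  (forall f, G f -> exists g, G g /\ (forall x, g (f x) = x) /\ (forall x, f (g x) = x)).

Definition subgroup_of (n : nat) (H G : (vec n -> vec n) -> Prop) : Prop :=
  subgroup_E n H /\ (forall h, H h -> G h).

(* Coordinates (B, b) of an affine map f : b = f 0, column j of B = f e_j - f 0.
   These identify E(n) with O(n) x R^n. *)
Definition zerov (n : nat) : vec n := fun _ => 0.
Definition ev (n : nat) (j : Ix n) : vec n := fun i => kron n i j.
Definition transl (n : nat) (f : vec n -> vec n) : vec n := f (zerov n).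
Definition linpart (n : nat) (f : vec n -> vec n) : mat n :=
  fun i j => f (ev n j) i - f (zerov n) i.

(* Discreteness in the topology of O(n) x R^n (product of the Euclidean
   topologies; the sup-distance on entries gives the same topology). *)
Definition discrete (n : nat) (G : (vec n -> vec n) -> Prop) : Prop :=
  forall g, G g -> exists eps : R, 0 < eps /\
    forall h, G h ->
      (forall i, Rabs (transl n h i - transl n g i) < eps) ->
      (forall i j, Rabs (linpart n h i j - linpart n g i j) < eps) ->
      h = g.

Definition simil (n : nat) (lam : R) (A' : mat n) : vec n -> vec n :=
  fun x => fun i => lam * mv n A' x i.
Definition simil_inv (n : nat) (lam : R) (A' : mat n) : vec n -> vec n :=
  fun x => fun i => / lam * mv n (transpose n A') x i.

Definition conj_set (n : nat) (A Ainv : vec n -> vec n)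
  (G : (vec n -> vec n) -> Prop) : (vec n -> vec n) -> Prop :=
  fun h => exists g, G g /\ h = (fun x => A (g (Ainv x))).

Definition finite_index (n : nat) (H G : (vec n -> vec n) -> Prop) : Prop :=
  exists l : list (vec n -> vec n),
    (forall r, In r l -> G r) /\
    forall g, G g -> exists r h, In r l /\ H h /\ g = (fun x => r (h x)).

(* Main.v *)
Require Import Defs.
From Stdlib Require Import Reals List Lra Lia ZArith Arith.
From Stdlib Require Import FunctionalExtensionality ProofIrrelevance Classical.
Open Scope R_scope.

Lemma sum_upto_ext g h m : (forall k, (k < m)%nat -> g k = h k) -> sum_upto g m = sum_upto h m.
Proof. induction m; simpl; intros; auto. rewrite IHm by (intros; apply H; lia). rewrite H by lia. reflexivity. Qed.

Lemma sum_upto_add g h m : sum_upto (fun k => g k + h k) m = sum_upto g m + sum_upto h m.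
Proof. induction m; simpl; [lra|rewrite IHm; lra]. Qed.

Lemma sum_upto_scal c g m : sum_upto (fun k => c * g k) m = c * sum_upto g m.
Proof. induction m; simpl; [lra|rewrite IHm; lra]. Qed.

Lemma sum_upto_const c m : sum_upto (fun _ => c) m = INR m * c.
Proof. induction m; simpl sum_upto; [simpl; lra | rewrite IHm, S_INR; lra]. Qed.

Lemma sum_upto_le g h m : (forall k, g k <= h k) -> sum_upto g m <= sum_upto h m.
Proof. intros; induction m; simpl; [lra| specialize (H m); lra]. Qed.

Lemma sum_upto_abs g m : Rabs (sum_upto g m) <= sum_upto (fun k => Rabs (g k)) m.
Proof. induction m; simpl. rewrite Rabs_R0; lra.
  eapply Rle_trans; [apply Rabs_triang|lra]. Qed.

Lemma sum_upto_nonneg g m : (forall k, 0 <= g k) -> 0 <= sum_upto g m.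
Proof. intros; induction m; simpl; [lra| specialize (H m); lra]. Qed.

Lemma sum_upto_term g m k : (forall j, 0 <= g j) -> (k < m)%nat -> g k <= sum_upto g m.
Proof. induction m; intros; [lia|simpl]. destruct (Nat.eq_dec k m).
  - subst. pose proof (sum_upto_nonneg g m H). lra.
  - pose proof (IHm H ltac:(lia)). specialize (H m). lra. Qed.

Lemma sum_upto_single g m k0 : (k0 < m)%nat -> (forall k, k <> k0 -> g k = 0) -> sum_upto g m = g k0.
Proof. induction m; intros; [lia|simpl]. destruct (Nat.eq_dec k0 m).
  - subst. rewrite (sum_upto_ext g (fun _ => 0)) by (intros; apply H0; lia).
    rewrite sum_upto_const. lra.
  - rewrite IHm by (auto; lia). rewrite (H0 m) by auto. lra. Qed.

Lemma sum_upto_swap (f : nat -> nat -> R) a b :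
  sum_upto (fun i => sum_upto (fun j => f i j) b) a = sum_upto (fun j => sum_upto (fun i => f i j) a) b.
Proof. induction a; simpl.
  - rewrite (sum_upto_const 0). lra.
  - rewrite IHa. rewrite <- sum_upto_add. reflexivity. Qed.

Definition ext (n:nat) (f : Ix n -> R) (k:nat) : R :=
  match lt_dec k n with left H => f (exist _ k H) | right _ => 0 end.

Lemma sumI_def n f : sumI n f = sum_upto (ext n f) n.
Proof. reflexivity. Qed.

Lemma ext_at n f (i : Ix n) : ext n f (proj1_sig i) = f i.
Proof. destruct i as [k H]; unfold ext; simpl. destruct (lt_dec k n); [|contradiction].
  f_equal. f_equal. apply proof_irrelevance. Qed.

Lemma sumI_ext n f g : (forall i, f i = g i) -> sumI n f = sumI n g.
Proof. intros. unfold sumI; apply sum_upto_ext; intros k _; destruct (lt_dec k n); auto. Qed.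

Lemma sumI_add n f g : sumI n (fun i => f i + g i) = sumI n f + sumI n g.
Proof. unfold sumI. rewrite <- sum_upto_add. apply sum_upto_ext; intros k _; destruct (lt_dec k n); auto; lra. Qed.

Lemma sumI_scal n c f : sumI n (fun i => c * f i) = c * sumI n f.
Proof. unfold sumI. rewrite <- sum_upto_scal. apply sum_upto_ext; intros k _; destruct (lt_dec k n); auto; lra. Qed.

Lemma sumI_sub n f g : sumI n (fun i => f i - g i) = sumI n f - sumI n g.
Proof. replace (sumI n f - sumI n g) with (sumI n f + (-1) * sumI n g) by ring.
  rewrite <- sumI_scal, <- sumI_add. apply sumI_ext; intros; ring. Qed.

Lemma sumI_const n c : sumI n (fun _ => c) = INR n * c.
Proof. unfold sumI. rewrite <- sum_upto_const. apply sum_upto_ext; intros k Hk; destruct (lt_dec k n); auto; lia. Qed.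

Lemma sumI_le n f g : (forall i, f i <= g i) -> sumI n f <= sumI n g.
Proof. intros. unfold sumI; apply sum_upto_le; intros k; destruct (lt_dec k n); auto; lra. Qed.

Lemma sumI_abs n f : Rabs (sumI n f) <= sumI n (fun i => Rabs (f i)).
Proof. unfold sumI. eapply Rle_trans; [apply sum_upto_abs|].
  apply sum_upto_le; intros k; destruct (lt_dec k n); auto; try lra. rewrite Rabs_R0; lra. Qed.

Lemma sumI_nonneg n f : (forall i, 0 <= f i) -> 0 <= sumI n f.
Proof. intros. unfold sumI; apply sum_upto_nonneg; intros k; destruct (lt_dec k n); auto; lra. Qed.

Lemma sumI_term n f i : (forall i, 0 <= f i) -> f i <= sumI n f.
Proof. intros. rewrite sumI_def, <- ext_at. apply sum_upto_term.
  intros j; unfold ext; destruct (lt_dec j n); auto; lra.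
  destruct i; simpl; auto. Qed.

Lemma sumI_bound n f d : (forall i, f i <= d) -> sumI n f <= INR n * d.
Proof. intros. rewrite <- sumI_const. apply sumI_le; auto. Qed.

Lemma sumI_kron n (i : Ix n) x : sumI n (fun l => kron n i l * x l) = x i.
Proof. rewrite sumI_def. rewrite (sum_upto_single _ _ (proj1_sig i)).
  - rewrite ext_at. unfold kron. destruct (Nat.eq_dec _ _); [lra|congruence].
  - destruct i; simpl; auto.
  - intros k Hk. unfold ext. destruct (lt_dec k n); auto. unfold kron; simpl.
    destruct (Nat.eq_dec _ _); [congruence|lra]. Qed.

Lemma sumI_swap n (f : Ix n -> Ix n -> R) :
  sumI n (fun i => sumI n (fun j => f i j)) = sumI n (fun j => sumI n (fun i => f i j)).
Proof.
  set (G := fun a b => match lt_dec a n with left Ha => match lt_dec b n with left Hb =>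
             f (exist _ a Ha) (exist _ b Hb) | right _ => 0 end | right _ => 0 end).
  transitivity (sum_upto (fun a => sum_upto (fun b => G a b) n) n).
  - unfold sumI. apply sum_upto_ext; intros a _. unfold G. destruct (lt_dec a n).
    + apply sum_upto_ext; intros b _. destruct (lt_dec b n); auto.
    + rewrite sum_upto_const; lra.
  - rewrite sum_upto_swap. unfold sumI. apply sum_upto_ext; intros b _. unfold G. destruct (lt_dec b n).
    + apply sum_upto_ext; intros a _. destruct (lt_dec a n); auto.
    + rewrite (sum_upto_ext _ (fun _ => 0)). rewrite sum_upto_const; lra.
      intros a _. destruct (lt_dec a n); auto. Qed.

Lemma orth_entry n B i j : orthogonal n B -> Rabs (B i j) <= 1.
Proof. intros H. pose proof (H j j) as Hj. unfold kron in Hj.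
  destruct (Nat.eq_dec _ _); [|congruence].
  assert (B i j * B i j <= 1).
  { rewrite <- Hj. apply (sumI_term n (fun k => B k j * B k j)). intros; nra. }
  unfold Rabs; destruct (Rcase_abs _); nra. Qed.

Lemma mv_transpose_mv n A x i : orthogonal n A -> mv n (transpose n A) (mv n A x) i = x i.
Proof. intros HA. unfold mv, transpose.
  transitivity (sumI n (fun k => sumI n (fun l => A k i * A k l * x l))).
  { apply sumI_ext; intros k. rewrite <- sumI_scal. apply sumI_ext; intros; ring. }
  rewrite sumI_swap.
  transitivity (sumI n (fun l => kron n i l * x l)); [|apply sumI_kron].
  apply sumI_ext; intros l. rewrite <- HA.
  rewrite (Rmult_comm (sumI _ _)), <- sumI_scal. apply sumI_ext; intros; ring. Qed.

Lemma mv_zero n M i : mv n M (zerov n) i = 0.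
Proof. unfold mv, zerov. rewrite (sumI_ext _ _ (fun _ => 0)). rewrite sumI_const; ring.
  intros; ring. Qed.

Lemma iso_lip n f y z i : is_isometry n f ->
  Rabs (f y i - f z i) <= sumI n (fun l => Rabs (y l - z l)).
Proof. intros [B [b [HB ->]]]. cbv beta.
  replace (mv n B y i + b i - (mv n B z i + b i)) with (sumI n (fun l => B i l * (y l - z l))).
  - eapply Rle_trans; [apply sumI_abs|]. apply sumI_le; intros l.
    rewrite Rabs_mult. pose proof (orth_entry n B i l HB). pose proof (Rabs_pos (y l - z l)). nra.
  - unfold mv. replace (sumI n (fun k => B i k * y k) + b i - (sumI n (fun k => B i k * z k) + b i)) with (sumI n (fun k => B i k * y k) - sumI n (fun k => B i k * z k)) by ring.
    rewrite <- sumI_sub. apply sumI_ext; intros; ring. Qed.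

Fixpoint sumL {A} (f : A -> R) (l : list A) : R :=
  match l with nil => 0 | x :: l' => f x + sumL f l' end.

Lemma sumL_ext {A} (f g : A -> R) l : (forall x, f x = g x) -> sumL f l = sumL g l.
Proof. intros; induction l; simpl; auto. rewrite IHl, H; auto. Qed.
Lemma sumL_add {A} (f g : A -> R) l : sumL (fun x => f x + g x) l = sumL f l + sumL g l.
Proof. induction l; simpl; [lra|rewrite IHl; lra]. Qed.
Lemma sumL_nonneg {A} (f : A -> R) l : (forall x, 0 <= f x) -> 0 <= sumL f l.
Proof. intros; induction l; simpl; [lra| specialize (H a); lra]. Qed.
Lemma sumL_term {A} (f : A -> R) l t : (forall x, 0 <= f x) -> In t l -> f t <= sumL f l.
Proof. intros Hf; induction l; simpl; [tauto|]. intros [->|Hi].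
  - pose proof (sumL_nonneg f l Hf); lra.
  - specialize (IHl Hi); specialize (Hf a); lra. Qed.
Lemma sumL_bound {A} (f : A -> R) l d : (forall x, In x l -> f x <= d) -> sumL f l <= INR (length l) * d.
Proof. intros; induction l; simpl length; simpl sumL. simpl; lra.
  rewrite S_INR. assert (f a <= d) by (apply H; simpl; auto).
  assert (sumL f l <= INR (length l) * d) by (apply IHl; intros; apply H; simpl; auto). lra. Qed.

Lemma up_mono x y : x <= y -> (up x <= up y)%Z.
Proof. intros. destruct (archimed x), (archimed y).
  assert (IZR (up x - 1) < IZR (up y)) by (rewrite minus_IZR; simpl; lra).
  apply lt_IZR in H4. lia. Qed.

Lemma up_close x y : up x = up y -> Rabs (x - y) < 1.
Proof. intros. destruct (archimed x), (archimed y). rewrite H in *.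
  unfold Rabs; destruct (Rcase_abs _); lra. Qed.

Lemma len_le1 {T} (L : list T) : NoDup L -> (forall x y, In x L -> In y L -> x <> y -> False) -> (length L <= 1)%nat.
Proof. intros Hn H. destruct L as [|x [|y L]]; simpl; try lia.
  exfalso. inversion Hn; subst. apply (H x y); simpl; auto. intro; subst; apply H2; simpl; auto. Qed.

Lemma count_split {T} (b : T -> Z) ts (L : list T) : (forall x, In x L -> In (b x) ts) ->
  INR (length L) <= sumL (fun t => INR (length (filter (fun x => Z.eqb (b x) t) L))) ts.
Proof. induction L; intros H.
  - simpl. apply sumL_nonneg; intros; lra.
  - rewrite (sumL_ext _ (fun t => INR (length (filter (fun x => Z.eqb (b x) t) L)) + (if Z.eqb (b a) t then 1 else 0))).
    + rewrite sumL_add. simpl length. rewrite S_INR.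
      assert (1 <= sumL (fun t => if Z.eqb (b a) t then 1 else 0) ts).
      { replace 1 with (if Z.eqb (b a) (b a) then 1 else 0) at 1 by (rewrite Z.eqb_refl; auto).
        apply (sumL_term (fun t => if Z.eqb (b a) t then 1 else 0)).
        intros; destruct (Z.eqb _ _); lra. apply H; simpl; auto. }
      assert (INR (length L) <= sumL (fun t => INR (length (filter (fun x => Z.eqb (b x) t) L))) ts)
        by (apply IHL; intros; apply H; simpl; auto). lra.
    + intros t. simpl. destruct (Z.eqb (b a) t); simpl length; [rewrite S_INR|]; lra. Qed.

Lemma counting {T} (cs : list (T -> R)) (d Rb : R) : 0 < d -> 0 <= Rb -> forall L : list T, NoDup L ->
  (forall x c, In x L -> In c cs -> Rabs (c x) <= Rb) ->
  (forall x y, In x L -> In y L -> x <> y -> exists c, In c cs /\ d <= Rabs (c x - c y)) ->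
  INR (length L) <= (2*Rb/d + 3) ^ length cs.
Proof. intros Hd HR. assert (HB : 0 <= 2*Rb/d + 3) by (unfold Rdiv; pose proof (Rinv_0_lt_compat d Hd); nra).
  induction cs as [|c cs IH]; intros L Hn Hb Hs.
  - simpl. replace 1 with (INR 1) by reflexivity. apply le_INR. apply len_le1; auto.
    intros x y Hx Hy Hxy. destruct (Hs x y Hx Hy Hxy) as [c [[] _]].
  - set (bk := fun x => up (c x / d)).
    set (lo := up (- Rb / d)). set (hi := up (Rb / d)).
    set (N := Z.to_nat (hi - lo + 1)).
    set (ts := map (fun k => (lo + Z.of_nat k)%Z) (seq 0 N)).
    assert (Hlohi : (lo <= hi)%Z) by (apply up_mono; unfold Rdiv; pose proof (Rinv_0_lt_compat d Hd); nra).
    assert (Hin : forall x, In x L -> In (bk x) ts).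
    { intros x Hx. assert (Hc := Hb x c Hx (or_introl eq_refl)).
      assert (-Rb <= c x <= Rb) by (unfold Rabs in Hc; destruct (Rcase_abs _); lra).
      pose proof (Rinv_0_lt_compat d Hd).
      assert (lo <= bk x)%Z by (apply up_mono; unfold Rdiv; nra).
      assert (bk x <= hi)%Z by (apply up_mono; unfold Rdiv; nra).
      apply in_map_iff. exists (Z.to_nat (bk x - lo)). split. lia.
      apply in_seq. unfold N. lia. }
    eapply Rle_trans; [apply (count_split bk ts L Hin)|].
    eapply Rle_trans; [apply (sumL_bound _ _ ((2*Rb/d + 3) ^ length cs))|].
    + intros t _. apply IH.
      * apply NoDup_filter; auto.
      * intros x c' Hx Hc'. apply filter_In in Hx. apply Hb; simpl; tauto.
      * intros x y Hx Hy Hxy. apply filter_In in Hx, Hy. destruct Hx as [Hx Ex], Hy as [Hy Ey].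
        destruct (Hs x y Hx Hy Hxy) as [c' [[<-|Hc'] Hd']]; [|eauto].
        exfalso. apply Z.eqb_eq in Ex, Ey. assert (bk x = bk y) by congruence.
        apply up_close in H.
        replace (c x / d - c y / d) with ((c x - c y) * / d) in H by (field; lra).
        rewrite Rabs_mult, (Rabs_pos_eq (/ d)) in H by (left; apply Rinv_0_lt_compat; auto).
        apply (Rmult_lt_compat_r d) in H; auto. rewrite Rmult_assoc, Rinv_l in H by lra. lra.
    + simpl length. simpl pow. apply Rmult_le_compat_r. apply pow_le; auto.
      unfold ts. rewrite length_map, length_seq. unfold N.
      rewrite INR_IZR_INZ, Z2Nat.id by lia. rewrite plus_IZR, minus_IZR.
      destruct (archimed (Rb/d)), (archimed (-Rb/d)). fold hi in H, H0. fold lo in H1, H2.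
      unfold Rdiv in *. lra. Qed.

Definition ixl (n : nat) : list (Ix n) :=
  flat_map (fun k => match lt_dec k n with left H => exist _ k H :: nil | right _ => nil end) (seq 0 n).

Lemma In_ixl n (i : Ix n) : In i (ixl n).
Proof. destruct i as [k H]. apply in_flat_map. exists k; split; [apply in_seq; lia|].
  destruct (lt_dec k n); [left; f_equal; apply proof_irrelevance | contradiction]. Qed.

Definition coords n : list ((vec n -> vec n) -> R) :=
  flat_map (fun p => map (fun i => fun f : vec n -> vec n => f p i) (ixl n)) (zerov n :: map (ev n) (ixl n)).

Lemma coords_0 n i : In (fun f : vec n -> vec n => f (zerov n) i) (coords n).
Proof. apply in_flat_map. exists (zerov n). split; [simpl; auto|]. apply in_map_iff. exists i; split; auto. apply In_ixl. Qed.

Lemma coords_e n j i : In (fun f : vec n -> vec n => f (ev n j) i) (coords n).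
Proof. apply in_flat_map. exists (ev n j). split; [right; apply in_map_iff; exists j; split; auto; apply In_ixl|].
  apply in_map_iff. exists i; split; auto. apply In_ixl. Qed.

Lemma coords_inv n c : In c (coords n) -> exists p i, (p = zerov n \/ exists j, p = ev n j) /\ c = fun f => f p i.
Proof. intros H. apply in_flat_map in H as [p [Hp Hc]]. apply in_map_iff in Hc as [i [<- _]].
  exists p, i; split; auto. destruct Hp as [<-|Hp]; auto. apply in_map_iff in Hp as [j [<- _]]. eauto. Qed.

Lemma unif_disc n G : subgroup_E n G -> discrete n G -> exists d, 0 < d /\
  forall g h, G g -> G h ->
    (forall i, Rabs (g (zerov n) i - h (zerov n) i) < d) ->
    (forall j i, Rabs (g (ev n j) i - h (ev n j) i) < d) -> g = h.
Proof. intros [Hiso [Hid [Hmul Hinv]]] Hdisc.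
  destruct (Hdisc _ Hid) as [eps [Heps Hd]].
  pose proof (pos_INR n) as Hn.
  exists (eps / (2 * INR n + 2)). split. apply Rdiv_lt_0_compat; lra.
  intros g h Hg Hh H0 He.
  destruct (Hinv g Hg) as [gi [Hgi [Hgig Hggi]]].
  set (dl := eps / (2 * INR n + 2)) in *.
  assert (Hndl : INR n * dl < eps / 2).
  { unfold dl. apply (Rmult_lt_reg_r (2 * INR n + 2)). lra. field_simplify; lra. }
  assert (Hlip : forall p, (forall l, Rabs (g p l - h p l) < dl) -> forall i, Rabs (gi (h p) i - gi (g p) i) <= INR n * dl).
  { intros p Hp i. eapply Rle_trans; [apply iso_lip, Hiso, Hgi|]. apply sumI_bound. intros l.
    rewrite Rabs_minus_sym. left; auto. }
  assert (Hk : (fun x => gi (h x)) = (fun x => x)).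
  { apply Hd. apply Hmul; auto.
    - intros i. unfold transl. idtac.
      replace (zerov n i) with (gi (g (zerov n)) i) by (rewrite Hgig; auto).
      eapply Rle_lt_trans; [apply Hlip; auto|]. lra.
    - intros i j. unfold linpart.
      replace (gi (h (ev n j)) i - gi (h (zerov n)) i - (ev n j i - zerov n i)) with
        ((gi (h (ev n j)) i - gi (g (ev n j)) i) - (gi (h (zerov n)) i - gi (g (zerov n)) i))
        by (rewrite !Hgig; ring).
      eapply Rle_lt_trans; [apply Rabs_triang|]. rewrite Rabs_Ropp.
      pose proof (Hlip _ (He j) i). pose proof (Hlip _ H0 i). lra. }
  apply functional_extensionality; intros x.
  rewrite <- (Hggi (h x)). change (gi (h x)) with ((fun x => gi (h x)) x). rewrite Hk. auto. Qed.

Lemma coords_sep n G : subgroup_E n G -> discrete n G -> exists d, 0 < d /\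
  forall g h, G g -> G h -> g <> h -> exists c, In c (coords n) /\ d <= Rabs (c g - c h).
Proof. intros HG HD. destruct (unif_disc n G HG HD) as [d [Hd H]]. exists d; split; auto.
  intros g h Hg Hh Hne. apply NNPP; intros Hno. apply Hne. apply H; auto.
  - intros i. apply Rnot_le_lt. intros Hle. apply Hno. exists (fun f => f (zerov n) i); split; auto. apply coords_0.
  - intros j i. apply Rnot_le_lt. intros Hle. apply Hno. exists (fun f => f (ev n j) i); split; auto. apply coords_e. Qed.

Lemma coords_bound n g Rb : is_isometry n g -> (forall i, Rabs (g (zerov n) i) <= Rb) ->
  forall c, In c (coords n) -> Rabs (c g) <= Rb + INR n.
Proof. intros Hg Hb c Hc. destruct (coords_inv n c Hc) as [p [i [Hp ->]]].
  destruct Hp as [->|[j ->]].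
  - pose proof (Hb i); pose proof (pos_INR n); lra.
  - pose proof (iso_lip n g (ev n j) (zerov n) i Hg).
    assert (sumI n (fun l => Rabs (ev n j l - zerov n l)) <= INR n * 1).
    { apply sumI_bound. intros l. unfold ev, zerov, kron. destruct (Nat.eq_dec _ _);
      rewrite Rminus_0_r; [rewrite Rabs_R1|rewrite Rabs_R0]; lra. }
    pose proof (Hb i). cbv beta.
    replace (g (ev n j) i) with ((g (ev n j) i - g (zerov n) i) + g (zerov n) i) by ring.
    eapply Rle_trans; [apply Rabs_triang|]. lra. Qed.

Fixpoint good {n} (H : (vec n -> vec n) -> Prop) (rs : list (vec n -> vec n)) : Prop :=
  match rs with
  | nil => True
  | r :: rs' => (forall s, In s rs' ->
        (~ exists h, H h /\ r = (fun x => s (h x))) /\ (~ exists h, H h /\ s = (fun x => r (h x))))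
      /\ good H rs'
  end.

Fixpoint Ls {n} (rs : list (vec n -> vec n)) (phi : (vec n -> vec n) -> (vec n -> vec n)) (j : nat)
  : list (vec n -> vec n) :=
  match j with
  | O => (fun x => x) :: nil
  | S j' => flat_map (fun r => map (fun g => fun x => r (phi g x)) (Ls rs phi j')) rs
  end.

Lemma NoDup_map_in {A B} (f : A -> B) l : (forall x y, In x l -> In y l -> f x = f y -> x = y) -> NoDup l -> NoDup (map f l).
Proof. induction l; intros Hi Hn; simpl; constructor.
  - intros Hin. apply in_map_iff in Hin as [y [Hy Hyl]]. inversion Hn; subst.
    assert (y = a) by (apply Hi; simpl; auto). subst; auto.
  - inversion Hn; subst. apply IHl; auto. intros; apply Hi; simpl; auto. Qed.

Lemma exists_nat_gt X : exists m : nat, X < INR m.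
Proof. destruct (archimed X) as [H1 _]. destruct (Z_le_gt_dec 0 (up X)).
  - exists (Z.to_nat (up X) + 1)%nat. rewrite plus_INR, INR_IZR_INZ, Z2Nat.id by auto. simpl; lra.
  - exists 0%nat. simpl. apply Z.gt_lt in g. apply IZR_lt in g. lra. Qed.

Lemma pow2_gt j : INR j < 2 ^ j.
Proof. induction j; [simpl; lra|]. rewrite S_INR; simpl pow. assert (1 <= 2 ^ j) by (apply pow_R1_Rle; lra). lra. Qed.

Lemma bound_list n (rs : list (vec n -> vec n)) : exists C, 0 <= C /\ forall r, In r rs -> forall i, Rabs (r (zerov n) i) <= C.
Proof. induction rs as [|r rs [C [HC H]]].
  - exists 0; split; [lra| simpl; tauto].
  - exists (C + sumI n (fun l => Rabs (r (zerov n) l))).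
    assert (0 <= sumI n (fun l => Rabs (r (zerov n) l))) by (apply sumI_nonneg; intros; apply Rabs_pos).
    split; [lra|]. intros s Hs i. destruct Hs as [<-|Hs].
    + pose proof (sumI_term n (fun l => Rabs (r (zerov n) l)) i (fun _ => Rabs_pos _)). simpl in H1. lra.
    + pose proof (H s Hs i). lra. Qed.


Lemma index_bound n G phi c0 :
  subgroup_E n G -> discrete n G -> 0 <= c0 ->
  (forall g, G g -> G (phi g)) ->
  (forall g g', phi g = phi g' -> g = g') ->
  (forall g g' x, phi g (phi g' x) = phi (fun y => g (g' y)) x) ->
  (forall x, phi (fun y => y) x = x) ->
  (forall g Rb, G g -> (forall i, Rabs (g (zerov n) i) <= Rb) -> forall i, Rabs (phi g (zerov n) i) <= c0 * Rb) ->
  exists M : nat, forall rs, good (fun h => exists g, G g /\ h = phi g) rs -> (forall r, In r rs -> G r) ->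
     (length rs < M)%nat.
Proof.
  intros HG HD Hc0 HphiG Hinj Hmul Hid Hbnd.
  pose proof HG as [Hiso [HGid [HGmul HGinv]]].
  destruct (coords_sep n G HG HD) as [d [Hd Hsep]].
  set (K := length (coords n)).
  set (a := INR n * c0 + 1).
  pose proof (pos_INR n) as Hn.
  assert (Ha : 1 <= a) by (unfold a; nra).
  destruct (exists_nat_gt (2 * a ^ K)) as [M HM].
  exists M. intros rs Hgood HrsG.
  apply Nat.nle_gt. intros HMle.
  set (m := length rs).
  destruct (bound_list n rs) as [C [HC HCb]].
  assert (Hrinj : forall r x y, G r -> r x = r y -> x = y).
  { intros r x y Hr E. destruct (HGinv r Hr) as [ri [_ [Hri _]]]. rewrite <- (Hri x), <- (Hri y), E; auto. }
  assert (Hstep : forall L, NoDup L -> (forall g, In g L -> G g) -> forall rs',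
      good (fun h => exists g, G g /\ h = phi g) rs' -> (forall r, In r rs' -> G r) ->
      NoDup (flat_map (fun r => map (fun g => fun x => r (phi g x)) L) rs')).
  { intros L HL HLG. induction rs' as [|r rs' IH]; intros Hg HrG; simpl; [constructor|].
    destruct Hg as [Hg1 Hg2].
    apply NoDup_app.
    - apply NoDup_map_in; auto. intros g g' _ _ E. apply Hinj.
      apply functional_extensionality; intros x. apply (Hrinj r); [apply HrG; simpl; auto|].
      exact (equal_f E x).
    - apply IH; auto. intros; apply HrG; simpl; auto.
    - intros f Hf1 Hf2. apply in_map_iff in Hf1 as [g [Eg Hg]].
      apply in_flat_map in Hf2 as [s [Hs Hf2]]. apply in_map_iff in Hf2 as [g' [Eg' Hg']].
      destruct (Hg1 s Hs) as [Hno _]. apply Hno.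
      destruct (HGinv g (HLG g Hg)) as [gi [Hgi [Hgig Hggi]]].
      exists (phi (fun y => g' (gi y))). split.
      + exists (fun y => g' (gi y)); split; auto.
      + apply functional_extensionality; intros x.
        rewrite <- Hmul.
        change (s (phi g' (phi gi x))) with ((fun x => s (phi g' x)) (phi gi x)).
        rewrite Eg', <- Eg. rewrite Hmul.
        replace (fun y => g (gi y)) with (fun y : vec n => y) by (apply functional_extensionality; auto).
        rewrite Hid. auto. }
  assert (HP : forall j, (forall g, In g (Ls rs phi j) -> G g /\ forall i, Rabs (g (zerov n) i) <= a ^ j * (C + 1))
      /\ NoDup (Ls rs phi j) /\ length (Ls rs phi j) = (m ^ j)%nat).
  { induction j as [|j [IH1 [IH2 IH3]]].
    - simpl. split; [|split; [constructor; [simpl; tauto|constructor]|auto]].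
      intros g [<-|[]]. split; auto. intros i. unfold zerov. rewrite Rabs_R0. lra.
    - split; [|split].
      + intros f Hf. simpl in Hf. apply in_flat_map in Hf as [r [Hr Hf]].
        apply in_map_iff in Hf as [g [<- Hg]]. destruct (IH1 g Hg) as [HgG Hgb].
        split. apply HGmul; auto.
        intros i. assert (Haj : 1 <= a ^ j) by (apply pow_R1_Rle; lra).
        pose proof (Hbnd g _ HgG Hgb) as Hpb.
        pose proof (iso_lip n r (phi g (zerov n)) (zerov n) i (Hiso r (HrsG r Hr))) as Hl.
        assert (sumI n (fun l => Rabs (phi g (zerov n) l - zerov n l)) <= INR n * (c0 * (a ^ j * (C + 1)))).
        { apply sumI_bound. intros l. unfold zerov at 2. rewrite Rminus_0_r. auto. }
        pose proof (HCb r Hr i).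
        replace (r (phi g (zerov n)) i) with ((r (phi g (zerov n)) i - r (zerov n) i) + r (zerov n) i) by ring.
        eapply Rle_trans; [apply Rabs_triang|]. simpl pow. unfold a in *.
        assert (0 <= INR n * c0) by nra.
        assert (INR n * (c0 * (a ^ j * (C + 1))) = (INR n * c0) * (a ^ j * (C+1))) by ring.
        nra.
      + simpl. apply Hstep; auto. intros g Hg; apply IH1; auto.
      + simpl. rewrite (flat_map_constant_length (c := (m ^ j)%nat)).
        fold m; lia. intros r _. rewrite length_map; auto. }
  set (D := (2 * (C + 1 + INR n) / d + 3) ^ K).
  destruct (exists_nat_gt D) as [j Hj].
  destruct (HP j) as [H1 [H2 H3]].
  pose proof (counting (coords n) d (a ^ j * (C + 1) + INR n) Hd) as Hcnt.
  assert (Haj : 1 <= a ^ j) by (apply pow_R1_Rle; lra).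
  specialize (Hcnt ltac:(nra) (Ls rs phi j) H2).
  assert (HB : INR (length (Ls rs phi j)) <= (2 * (a ^ j * (C + 1) + INR n) / d + 3) ^ K).
  { apply Hcnt.
    - intros x c Hx Hc. destruct (H1 x Hx). eapply coords_bound; eauto.
    - intros x y Hx Hy Hxy. apply Hsep; auto; apply H1; auto. }
  rewrite H3, pow_INR in HB.
  assert (HB2 : (2 * (a ^ j * (C + 1) + INR n) / d + 3) ^ K <= (a ^ j) ^ K * D).
  { unfold D. rewrite <- Rpow_mult_distr. apply pow_incr. split.
    - unfold Rdiv. pose proof (Rinv_0_lt_compat d Hd).
      assert (0 <= a ^ j * (C + 1)) by nra.
      assert (0 <= 2 * (a ^ j * (C + 1) + INR n) * / d) by (apply Rmult_le_pos; lra).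
      lra.
    - unfold Rdiv. pose proof (Rinv_0_lt_compat d Hd).
      assert (2 * (a ^ j * (C + 1) + INR n) * / d <= a ^ j * (2 * (C + 1 + INR n) * / d)).
      { replace (a ^ j * (2 * (C + 1 + INR n) * / d)) with ((a ^ j * (2 * (C + 1 + INR n))) * / d) by ring.
        apply Rmult_le_compat_r; [lra|]. nra. }
      rewrite Rmult_plus_distr_l. lra. }
  assert (Hm : 2 * a ^ K < INR m) by (pose proof (le_INR _ _ HMle); unfold m; lra).
  assert (HaK : 0 < a ^ K) by (apply pow_lt; lra).
  assert (HmK : (2 * a ^ K) ^ j <= INR m ^ j) by (apply pow_incr; lra).
  rewrite Rpow_mult_distr in HmK.
  rewrite <- !pow_mult in *. rewrite Nat.mul_comm in HB2.
  assert (HajK : 0 < a ^ (K * j)) by (apply pow_lt; lra).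
  pose proof (pow2_gt j).
  assert (2 ^ j * a ^ (K * j) <= a ^ (K * j) * D) by lra.
  nra. Qed.

Lemma AiA n lam A' x : orthogonal n A' -> 0 < lam -> simil_inv n lam A' (simil n lam A' x) = x.
Proof. intros HA Hl. apply functional_extensionality; intros i. unfold simil_inv, simil.
  unfold mv at 1. rewrite (sumI_ext _ _ (fun k => lam * (transpose n A' i k * mv n A' x k))) by (intros; ring).
  rewrite sumI_scal. fold (mv n (transpose n A') (mv n A' x) i). rewrite mv_transpose_mv by auto.
  field. lra. Qed.

Lemma Ai0 n lam A' : simil_inv n lam A' (zerov n) = zerov n.
Proof. apply functional_extensionality; intros i. unfold simil_inv. rewrite mv_zero. unfold zerov. ring. Qed.

Lemma finite_from_bound n (H G : (vec n -> vec n) -> Prop) :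
  subgroup_E n H ->
  (exists M : nat, forall rs, good H rs -> (forall r, In r rs -> G r) -> (length rs < M)%nat) ->
  finite_index n H G.
Proof. intros [_ [_ [_ HHinv]]] [M HM]. apply NNPP; intros Hno.
  assert (Hext : forall rs, good H rs -> (forall r, In r rs -> G r) -> exists g, G g /\ good H (g :: rs)).
  { intros rs Hg HrG. apply NNPP; intros Hne. apply Hno. exists rs. split; auto.
    intros g HgG. apply NNPP; intros Hc. apply Hne. exists g; split; auto. simpl. split; auto.
    intros s Hs. split.
    - intros [h [Hh E]]. apply Hc. exists s, h; auto.
    - intros [h [Hh E]]. destruct (HHinv h Hh) as [h' [Hh' [_ Hhh']]]. apply Hc. exists s, h'.
      split; auto. split; auto. apply functional_extensionality; intros x. rewrite E. rewrite Hhh'. auto. }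
  assert (Hall : forall k, exists rs, good H rs /\ (forall r, In r rs -> G r) /\ length rs = k).
  { induction k as [|k [rs [Hg [HrG Hl]]]].
    - exists nil. simpl. repeat split; tauto.
    - destruct (Hext rs Hg HrG) as [g [HgG Hg']]. exists (g :: rs). split; auto. split; simpl; auto.
      intros r [<-|Hr]; auto. }
  destruct (Hall M) as [rs [Hg [HrG Hl]]]. specialize (HM rs Hg HrG). lia. Qed.

Theorem mainTheorem13 (n : nat) (Gamma : (vec n -> vec n) -> Prop)
  (lam : R) (A' : mat n) :
  subgroup_E n Gamma ->
  discrete n Gamma ->
  orthogonal n A' ->
  0 < lam ->
  (forall h, conj_set n (simil n lam A') (simil_inv n lam A') Gamma h -> Gamma h) ->
  subgroup_of n (conj_set n (simil n lam A') (simil_inv n lam A') Gamma) Gamma /\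
  finite_index n (conj_set n (simil n lam A') (simil_inv n lam A') Gamma) Gamma.
Proof.
  intros HG HD HA Hl Hsub.
  pose proof HG as [Hiso [HGid [HGmul HGinv]]].
  set (A := simil n lam A') in *. set (Ai := simil_inv n lam A') in *.
  set (phi := fun (g : vec n -> vec n) => fun x => A (g (Ai x))).
  assert (HAiA : forall x, Ai (A x) = x) by (intros; apply AiA; auto).
  assert (HphiG : forall g, Gamma g -> Gamma (phi g)) by (intros g Hg; apply Hsub; exists g; auto).
  assert (HAAi : forall x, A (Ai x) = x).
  { assert (HP : Gamma (phi (fun y => y))) by auto.
    destruct (HGinv _ HP) as [Q [_ [HQ _]]]. intros x.
    assert (Hidem : phi (fun y => y) (phi (fun y => y) x) = phi (fun y => y) x)
      by (unfold phi; rewrite HAiA; auto).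
    change (A (Ai x)) with (phi (fun y => y) x).
    rewrite <- (HQ (phi (fun y => y) x)). rewrite Hidem. apply HQ. }
  assert (HHsub : subgroup_E n (conj_set n A Ai Gamma)).
  { split; [|split; [|split]].
    - intros f Hf. apply Hiso, Hsub; auto.
    - exists (fun y => y). split; auto. apply functional_extensionality; intros; rewrite HAAi; auto.
    - intros f f' [g [Hg ->]] [g' [Hg' ->]]. exists (fun y => g (g' y)). split; auto.
      apply functional_extensionality; intros x. rewrite HAiA; auto.
    - intros f [g [Hg ->]]. destruct (HGinv g Hg) as [gi [Hgi [Hgig Hggi]]].
      exists (fun x => A (gi (Ai x))). split; [exists gi; auto|]. split; intros x.
      + rewrite HAiA, Hgig, HAAi; auto.
      + rewrite HAiA, Hggi, HAAi; auto. }
  split; [split; auto|].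
  apply finite_from_bound; auto.
  apply (index_bound n Gamma phi (lam * INR n)); auto.
  - pose proof (pos_INR n); nra.
  - intros g g' E. apply functional_extensionality; intros y.
    rewrite <- (HAiA (g y)), <- (HAiA (g' y)). rewrite <- (HAiA y) at 1 2.
    change (A (g (Ai (A y)))) with (phi g (A y)). change (A (g' (Ai (A y)))) with (phi g' (A y)).
    rewrite E. auto.
  - intros g g' x. unfold phi. rewrite HAiA. auto.
  - intros g Rb Hg Hb i. unfold phi. fold (zerov n). unfold Ai at 1. rewrite Ai0.
    unfold A, simil. rewrite Rabs_mult, (Rabs_pos_eq lam) by lra.
    assert (Rabs (mv n A' (g (zerov n)) i) <= INR n * Rb).
    { unfold mv. eapply Rle_trans; [apply sumI_abs|]. apply sumI_bound. intros k.
      rewrite Rabs_mult. pose proof (orth_entry n A' i k HA). pose proof (Rabs_pos (g (zerov n) k)).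
      pose proof (Hb k). nra. }
    nra. Qed.
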